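(* Let $L$ be an $\omega$-regular language over $\Sigma$, let $M=(\Sigma,Q,q_0,\delta)$ be a complete DFA, and let $u\in\Sigma^*$. Define the relation $\approx^u_{S'}$ on $\Sigma^*$ by $x\approx^u_{S'}y$ iff $M(ux)=M(uy)$ and for every $v\in\Sigma^*$, if $M(uxv)=M(u)$ then $\big(u(xv)^\omega\in L\Leftrightarrow u(yv)^\omega\in L\big)$. Then the index of $\approx^u_{S'}$ is bounded by $|Q|\cdot|\approx^u_P|$, where $|\approx^u_P|$ is the index of $\approx^u_P$.
   Context: For a complete DFA $M$ and finite word $w$, $M(w)$ is the state reached from the initial state on $w$. The relation $\approx^u_P$ on $\Sigma^*$ is defined by $x\approx^u_P y$ iff for all $v\in\Sigma^*$, $u(xv)^\omega\in L\Leftrightarrow u(yv)^\omega\in L$. The index of an equivalence relation is its number of equivalence classes. *)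

(* Defs.v *)
From mathcomp Require Import all_boot.
Set Implicit Arguments. Unset Strict Implicit. Unset Printing Implicit Defensive.

Definition oword (A : Type) := nat -> A.
Definition olang (A : Type) := oword A -> Prop.

Record buchi (A : finType) := Buchi {
  bstate : finType;
  binit : pred bstate;
  btrans : bstate -> A -> bstate -> bool;
  bacc : pred bstate }.

Definition buchi_accepts (A : finType) (B : buchi A) (w : oword A) : Prop :=
  exists r : nat -> bstate B,
    [/\ binit (r 0),
        (forall i, btrans (r i) (w i) (r i.+1)) &
        (forall N, exists i, N <= i /\ bacc (r i))].

Definition omega_regular (A : finType) (L : olang A) : Prop :=
  exists B : buchi A, forall w, L w <-> buchi_accepts B w.

Definition oprepend (A : Type) (u : seq A) (w : oword A) : oword A :=
  fun i => if i < size u then nth (w 0) u i else w (i - size u).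

(* "u w^omega \in L"; for empty w, w^omega is not an infinite word, and
   we take the membership to be False. *)
Definition in_uomega (A : Type) (L : olang A) (u w : seq A) : Prop :=
  match w with
  | [::] => False
  | a :: _ => L (oprepend u (fun i => nth a w (i %% size w)))
  end.

Record dfa (A : finType) := DFA {
  dstate : finType;
  dinit : dstate;
  dtrans : dstate -> A -> dstate }.

Definition drun (A : finType) (M : dfa A) (w : seq A) : dstate M :=
  foldl (@dtrans A M) (@dinit A M) w.

Definition approxP (A : finType) (L : olang A) (u : seq A) (x y : seq A) : Prop :=
  forall v, in_uomega L u (x ++ v) <-> in_uomega L u (y ++ v).

Definition approxS' (A : finType) (L : olang A) (M : dfa A) (u : seq A)
  (x y : seq A) : Prop :=
  drun M (u ++ x) = drun M (u ++ y) /\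
  forall v, drun M (u ++ x ++ v) = drun M u ->
    (in_uomega L u (x ++ v) <-> in_uomega L u (y ++ v)).

Definition has_index (T : Type) (R : T -> T -> Prop) (n : nat) : Prop :=
  exists f : T -> 'I_n, (forall x y, R x y <-> f x = f y) /\
                        (forall i, exists x, f x = i).

(* Main.v *)
Require Import Defs.
From mathcomp Require Import all_boot.
From Stdlib Require Import ClassicalEpsilon.
Set Implicit Arguments. Unset Strict Implicit.

Definition cb (P : Prop) : bool :=
  if excluded_middle_informative P then true else false.
Lemma cbP (P : Prop) : reflect P (cb P).
Proof. rewrite /cb; case: excluded_middle_informative => h; by constructor. Qed.

Section S.
Variables (A : finType) (L : olang A) (M : dfa A) (u : seq A).

Lemma drun_cat3 (x v : seq A) :
  drun M (u ++ x ++ v) = foldl (@dtrans A M) (drun M (u ++ x)) v.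
Proof. by rewrite /drun catA foldl_cat. Qed.

Lemma S_refl x : approxS' L M u x x.
Proof. by split. Qed.

Lemma S_sym x y : approxS' L M u x y -> approxS' L M u y x.
Proof.
move=> [h1 h2]; split=> // v hv; apply: iff_sym; apply: h2.
by rewrite drun_cat3 h1 -drun_cat3.
Qed.

Lemma S_trans x y z : approxS' L M u x y -> approxS' L M u y z ->
  approxS' L M u x z.
Proof.
move=> [h1 h2] [k1 k2]; split; first by rewrite h1.
move=> v hv; apply: iff_trans (h2 v hv) _; apply: k2.
by rewrite drun_cat3 -h1 -drun_cat3.
Qed.
End S.

Theorem lemma11 (A : finType) (L : olang A) (M : dfa A) (u : seq A) :
  omega_regular L ->
  forall n, has_index (approxP L u) n ->
  exists m, has_index (approxS' L M u) m /\ m <= #|dstate M| * n.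
Proof.
move=> _ n [fP [hP _]].
pose T := (dstate M * 'I_n)%type.
pose g (x : seq A) : T := (drun M (u ++ x), fP x).
have gS x y : g x = g y -> approxS' L M u x y.
  move=> [e1 e2]; split=> // v _; exact: (proj2 (hP x y) e2).
pose cls x := [set p : T | cb (exists y, g y = p /\ approxS' L M u x y)].
have mem_cls x p : p \in cls x -> exists y, g y = p /\ approxS' L M u x y.
  by rewrite inE => /cbP.
have gin x : g x \in cls x by rewrite inE; apply/cbP; exists x; split=> //; exact: S_refl.
have disj x y p : p \in cls x -> p \in cls y -> approxS' L M u x y.
  move=> /mem_cls [z1 [e1 s1]] /mem_cls [z2 [e2 s2]].
  apply: S_trans s1 _; apply: S_trans (gS _ _ _) (S_sym s2); by rewrite e1 e2.
have clsE x y : approxS' L M u x y -> cls x = cls y.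
  move=> s; apply/setP=> p; apply/idP/idP => /mem_cls [z [e s']];
    rewrite inE; apply/cbP; exists z; split=> //.
    exact: S_trans (S_sym s) s'.
  exact: S_trans s s'.
pose f0 x := odflt (g x) [pick p in cls x].
have f0in x : f0 x \in cls x.
  rewrite /f0; case: pickP => [p hp //|h]; by have := h (g x); rewrite gin.
have f0E x y : approxS' L M u x y <-> f0 x = f0 y.
  split; first by move=> s; rewrite /f0 -(clsE x y s); case: pickP => // h; have := h (g x); rewrite gin.
  move=> e; apply: (disj _ _ (f0 x)) => //; rewrite e; exact: f0in.
pose K := [set p : T | cb (exists x, f0 x = p)].
have inK x : f0 x \in K by rewrite inE; apply/cbP; exists x.
exists #|K|; split; last first.
  by apply: leq_trans (max_card _) _; rewrite card_prod card_ord.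
exists (fun x => enum_rank_in (inK [::]) (f0 x)); split.
  move=> x y; rewrite f0E; split; first by move=> ->.
  move=> e; rewrite -(enum_rankK_in (inK [::]) (inK x)) e.
  by rewrite (enum_rankK_in (inK [::]) (inK y)).
move=> i; have := enum_valP i; rewrite inE => /cbP [x ex].
by exists x; rewrite ex enum_valK_in.
Qed.
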